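(* For a measurable space $X$, the following are equivalent: (i) $X$ is sober, i.e. the diagram $X\xrightarrow{\delta}PX\rightrightarrows PPX$ with the two parallel maps $\delta_{PX}$ and $P\delta_X$ is an equalizer diagram in the category of measurable spaces; (ii) the map $x\mapsto\delta_x$ is a bijection between points of $X$ and $\{0,1\}$-valued probability measures on $X$; (iii) the map $X\to\mathrm{Stone}_\sigma(\Sigma(X))$, $x\mapsto(E\mapsto \top\text{ if }x\in E,\ \bot\text{ otherwise})$, is an isomorphism of measurable spaces.
   Context: For a measurable space $X$ with $\sigma$-algebra $\Sigma(X)$, $PX$ is the set of probability measures on $X$ with the smallest $\sigma$-algebra making $p\mapsto p(B)$ measurable for all $B\in\Sigma(X)$; for measurable $f$, $Pf$ is pushforward of measures; $\delta\colon X\to PX$ sends $x$ to the Dirac measure $\delta_x$. For a Boolean $\sigma$-algebra $A$ (a Boolean algebra with countable suprema and infima), $\mathrm{Stone}_\sigma(A)$ is the set of Boolean homomorphisms $A\to\{\bot,\top\}$ preserving countable suprema, equipped with the $\sigma$-algebra consisting of the sets $[a]=\{\phi:\phi(a)=\top\}$, $a\in A$. *)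

(* Defs.v *)
From HB Require Import structures.
From mathcomp Require Import all_boot all_order all_algebra.
From mathcomp Require Import all_classical all_reals all_analysis.
Set Implicit Arguments.
Unset Strict Implicit.
Unset Printing Implicit Defensive.
Import Order.TTheory GRing.Theory Num.Theory.
Local Open Scope classical_set_scope.
Local Open Scope ereal_scope.

(* Equality of measures: agreement on all measurable sets (library measures
   are set functions on all subsets, so this is the correct notion of
   equality of points of PX / PPX). *)
Definition meas_eq (R : realType) d (T : measurableType d)
  (m1 m2 : set T -> \bar R) : Prop :=
  forall A, measurable A -> m1 A = m2 A.

Section giry_P.
Context (R : realType) d (X : measurableType d).

(* PX = pprobability X R : probability measures on X with the sigma-algebra
   generated by the evaluation maps p |-> p(B).  delta : X -> PX. *)
Definition diracP (x : X) : pprobability X R := (\d_x : probability X R)%R.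

(* (i) X is sober: X --delta--> PX ==> PPX (delta_PX and P delta_X) is an
   equalizer diagram in the category of measurable spaces.
   delta_PX p = \d_p and (P delta_X) p = pushforward of p along delta_X;
   maps into PPX are compared pointwise as measures. *)
Definition sober : Prop :=
  measurable_fun [set: X] diracP /\
  (forall x : X, meas_eq (@dirac _ (pprobability X R) (diracP x) R)
                          (pushforward (diracP x) diracP)) /\
  (forall (d' : measure_display) (Z : measurableType d')
          (f : Z -> pprobability X R),
     measurable_fun [set: Z] f ->
     (forall z : Z, meas_eq (@dirac _ (pprobability X R) (f z) R)
                             (pushforward (f z) diracP)) ->
     exists! g : Z -> X,
       measurable_fun [set: Z] g /\ (forall z, meas_eq (diracP (g z)) (f z))).

Definition zero_one_valued (p : probability X R) : Prop :=
  forall B, measurable B -> p B = 0 \/ p B = 1.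

Definition dirac_bij : Prop :=
  (forall x y : X, meas_eq (diracP x) (diracP y) -> x = y) /\
  (forall p : probability X R, zero_one_valued p ->
     exists x : X, meas_eq (diracP x) p).

End giry_P.

Section stone.
Context d (X : measurableType d).

(* Boolean sigma-homomorphisms Sigma(X) -> {false, true}; encoded as
   functions on all subsets of X that vanish on non-measurable sets. *)
Definition sigma_hom (phi : set X -> bool) : Prop :=
  (forall A, ~ measurable A -> phi A = false) /\
  phi setT = true /\ phi set0 = false /\
  (forall A, measurable A -> phi (~` A) = ~~ phi A) /\
  (forall A B, measurable A -> measurable B -> phi (A `&` B) = phi A && phi B) /\
  (forall A B, measurable A -> measurable B -> phi (A `|` B) = phi A || phi B) /\
  (forall F : (set X)^nat, (forall n, measurable (F n)) ->
     (phi (\bigcup_n F n) <-> exists n, phi (F n))).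

Definition eta_fun (x : X) : set X -> bool :=
  fun E => `[< measurable E /\ E x >].

Lemma eta_fun_hom x : sigma_hom (eta_fun x).
Proof.
rewrite /eta_fun; split; [|split; [|split; [|split; [|split; [|split]]]]].
- by move=> A nA; apply/asboolP => -[].
- by apply/asboolP.
- by apply/asboolP => -[].
- move=> A mA; apply/asboolP/negP.
  + by case=> _ nAx /asboolP [].
  + by move=> h; split; [exact: measurableC| move=> Ax; apply: h; apply/asboolP].
- move=> A B mA mB; apply/asboolP/andP.
  + by case=> _ [Ax Bx]; split; apply/asboolP.
  + by case=> /asboolP [_ Ax] /asboolP [_ Bx]; split; [exact: measurableI|].
- move=> A B mA mB; apply/asboolP/orP.
  + by case=> _ [Ax|Bx]; [left|right]; apply/asboolP.
  + by split; [exact: measurableU|]; case: H => /asboolP [_ ?]; [left|right].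
- move=> F mF; split.
  + by move=> /asboolP [_ [n _ Fnx]]; exists n; apply/asboolP.
  + move=> [n /asboolP [_ Fnx]]; apply/asboolP; split.
      exact: bigcupT_measurable.
    by exists n.
Qed.

Definition stone : Type := {phi : set X -> bool | sigma_hom phi}.

Definition eta (x : X) : stone := exist _ (eta_fun x) (eta_fun_hom x).

HB.instance Definition _ := gen_eqMixin stone.
HB.instance Definition _ := gen_choiceMixin stone.
HB.instance Definition _ := isPointed.Build stone (eta point).

Definition stone_set (a : set X) : set stone := [set phi : stone | sval phi a].

Definition stone_measurable : set (set stone) :=
  [set S | exists a, measurable a /\ S = stone_set a].

Lemma stone_measurable0 : stone_measurable set0.
Proof.
exists set0; split => //; apply/seteqP; split => // phi.
rewrite /stone_set /=.
move: phi => [phi hphi]; case: (hphi) => [hh1 [hh2 [h0 hh_]]] /=.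
by rewrite h0.
Qed.

Lemma stone_measurableC A : stone_measurable A -> stone_measurable (~` A).
Proof.
move=> [a [ma ->]]; exists (~` a); split; first exact: measurableC.
apply/seteqP; split => phi; move: phi => [phi hphi]; case: (hphi) => [hh3 [hh4 [hh5 [hC hh_]]]];
  rewrite /stone_set /= hC //.
  by move/negP.
by move/negP.
Qed.

Lemma stone_measurable_bigcup (F : (set stone)^nat) :
  (forall i, stone_measurable (F i)) -> stone_measurable (\bigcup_i F i).
Proof.
move=> mF; have [a ha] := choice mF.
have ma : forall n, measurable (a n) by move=> n; case: (ha n).
exists (\bigcup_i a i); split; first exact: bigcupT_measurable.
apply/seteqP; split.
- move=> phi [i _]; rewrite (proj2 (ha i)) /stone_set /=.
  move: phi => [phi hphi]; case: (hphi) => [hh6 [hh7 [hh8 [hh9 [hh10 [hh11 hU]]]]]] /= phii.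
  by apply/hU => //; exists i.
- move=> phi; move: phi => [phi hphi]; case: (hphi) => [hh12 [hh13 [hh14 [hh15 [hh16 [hh17 hU]]]]]].
  rewrite /stone_set /=.
  move/hU => -[//|i ai].
  by exists i => //; rewrite (proj2 (ha i)).
Qed.

Definition stone_display : measure_display.
Proof. by constructor. Qed.

HB.instance Definition _ :=
  @isMeasurable.Build stone_display stone stone_measurable
    stone_measurable0 stone_measurableC stone_measurable_bigcup.

Definition stone_iso : Prop :=
  exists g : stone -> X,
    [/\ measurable_fun [set: X] eta, measurable_fun [set: stone] g,
        cancel eta g & cancel g eta].

End stone.

(* Main.v *)
Require Import Defs.
From HB Require Import structures.
From mathcomp Require Import all_boot all_order all_algebra.
From mathcomp Require Import all_classical all_reals all_analysis.
Import Order.TTheory GRing.Theory Num.Theory.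
Local Open Scope classical_set_scope.
Local Open Scope ereal_scope.

Lemma e01 (R : realType) : (0 : \bar R) <> 1.
Proof. by case=> /eqP; rewrite eq_sym oner_eq0. Qed.

Section zo.
Context (R : realType) d (X : measurableType d) (p : probability X R).
Hypothesis zo : zero_one_valued p.

Lemma zoC A : measurable A -> (p (~` A) = 1 <-> ~ p A = 1).
Proof.
move=> mA; rewrite probability_setC //.
have e01 : (0%R : \bar R) <> 1 by move=> /eqP; rewrite eq_sym; apply/negP; exact: oner_neq0.
case: (zo _ mA) => ->; rewrite ?sube0 ?subee //; split => //.
Qed.

Lemma zoU (F : (set X)^nat) : (forall n, measurable (F n)) ->
  (p (\bigcup_n F n) = 1 <-> exists n, p (F n) = 1).
Proof.
move=> mF; split.
- move=> h; apply: contrapT => hn.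
  have h0 : forall n, p (F n) = 0.
    by move=> n; case: (zo _ (mF n)) => // h1; exfalso; apply: hn; exists n.
  have : p.-negligible (\bigcup_n F n).
    by apply: negligible_bigcup => k; exists (F k); split => //; exact: h0.
  move=> [A [mA A0 sA]].
  have : p (\bigcup_n F n) <= p A by apply: le_measure => //; rewrite inE //; exact: bigcupT_measurable.
  by rewrite A0 h lee_fin ler10.
- move=> [n hn]; apply/eqP; rewrite eq_le probability_le1 /=; last exact: bigcupT_measurable.
  by rewrite -hn; apply: le_measure => //; rewrite ?inE //; [exact: bigcupT_measurable|exact: bigcup_sup].
Qed.
End zo.

Section zo2.
Context (R : realType) d (X : measurableType d) (p : probability X R).
Hypothesis zo : zero_one_valued p.

Lemma zoU2 A B : measurable A -> measurable B ->
  (p (A `|` B) = 1 <-> p A = 1 \/ p B = 1).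
Proof.
move=> mA mB; split.
- move=> h; apply: contrapT => hn.
  have hA : p A = 0 by case: (zo _ mA) => // h1; exfalso; apply: hn; left.
  have hB : p B = 0 by case: (zo _ mB) => // h1; exfalso; apply: hn; right.
  have hle : p (A `|` B) <= p A + p B := measureU2 p mA mB.
  by move: hle; rewrite h hA hB adde0 lee_fin ler10.
- have mU : measurable (A `|` B) by exact: measurableU.
  move=> hAB; apply/eqP; rewrite eq_le probability_le1 //=.
  by case: hAB => <-; apply: le_measure => //; rewrite ?inE.
Qed.

Lemma zoI A B : measurable A -> measurable B ->
  (p (A `&` B) = 1 <-> p A = 1 /\ p B = 1).
Proof.
move=> mA mB.
have -> : A `&` B = ~` (~` A `|` ~` B) by rewrite setCU !setCK.
have mAC : measurable (~` A) by exact: measurableC.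
have mBC : measurable (~` B) by exact: measurableC.
rewrite zoC //; last exact: measurableU.
rewrite zoU2 // !zoC //.
split.
- by move=> h; split; apply: contrapT => hh; apply: h; [left|right].
- by move=> [h1 h2] [].
Qed.
End zo2.

Lemma diracPE (R : realType) d (X : measurableType d) (x : X) (A : set X) :
  diracP R x A = (x \in A)%:R%:E.
Proof. by rewrite /diracP /= diracE. Qed.

Lemma dirac_zo (R : realType) d (X : measurableType d) (x : X) :
  zero_one_valued (diracP R x : probability X R).
Proof.
by move=> B _; rewrite diracPE; case: (x \in B); [right|left].
Qed.

Section L.
Context (R : realType) d (X : measurableType d).

Lemma Lpre (p : probability X R) : zero_one_valued p ->
  forall A : set (pprobability X R), measurable A ->
  measurable (diracP R (X:=X) @^-1` A) /\ (p (diracP R (X:=X) @^-1` A) = 1 <-> A p).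
Proof.
move=> zo.
pose C := [set A : set (pprobability X R) | measurable (diracP R (X:=X) @^-1` A) /\
   (p (diracP R (X:=X) @^-1` A) = 1 <-> A p)].
suff : <<s (@pset _ X R) >> `<=` C by move=> h A mA; exact: h.
apply: smallest_sub; first split.
- rewrite /C /= preimage_set0; split => //; split => // h.
  by move: h; rewrite measure0 => /eqP; rewrite eq_sym; apply/negP; exact: oner_neq0.
- move=> A [mA hA]; rewrite /C /= setTD preimage_setC; split; first exact: measurableC.
  rewrite (_ : _ @^-1` _ = ~` (diracP R (X:=X) @^-1` A)) // (@zoC _ _ _ p zo _ mA).
  by split => [h1|[_ h1] h2]; [split => // h2; apply/h1/hA | apply/h1/hA].
- move=> F hF; rewrite /C /= preimage_bigcup.
  have mF : forall n, measurable (diracP R (X:=X) @^-1` F n) by move=> n; case: (hF n).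
  split; first exact: bigcupT_measurable.
  rewrite zoU //; split.
  + by move=> [n /(proj2 (hF n)) h]; exists n.
  + by move=> [n _ h]; exists n; apply/(proj2 (hF n)).
- move=> _ [r r01 [U mU <-]].
  rewrite /C /mset /=.
  move: r01; rewrite /= in_itv /= => /andP [r0 r1].
  rewrite le_eqVlt in r0; case/orP: r0 => [/eqP <-|r0].
  + rewrite (_ : _ @^-1` _ = set0); last first.
      apply/seteqP; split => x //=; rewrite diracPE lte_fin.
        by case: (x \in U) => /=; [rewrite ltr10 | rewrite ltxx].
    split => //; rewrite measure0; split.
    * by move/e01.
    * by move=> h; move: (measure_ge0 p U); rewrite leNgt h.
  + rewrite (_ : _ @^-1` _ = ~` U); last first.
      apply/seteqP; split => x /=; rewrite diracPE lte_fin.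
      * by case: (boolP (x \in U)) => //=; [rewrite ltNge r1|rewrite notin_setE].
      * move=> nUx; have -> : (x \in U) = false by apply/negbTE/negP; rewrite in_setE.
        by [].
    split; first exact: measurableC.
    rewrite (@zoC _ _ _ p zo _ mU).
    case: (zo _ mU) => ->; rewrite lte_fin.
    * by rewrite r0; split => // _ /e01.
    * by rewrite ltNge r1; split.
Qed.
End L.

Section helpers.
Context (R : realType) d (X : measurableType d).

Lemma pre_mset1 (B : set X) : diracP R (X:=X) @^-1` mset B 1%R = ~` B.
Proof.
apply/seteqP; split => x /=; rewrite /mset /= diracPE lte_fin.
- by case: (boolP (x \in B)) => //=; [rewrite ltxx|rewrite notin_setE].
- move=> nBx; have -> : (x \in B) = false by apply/negbTE/negP; rewrite in_setE.
  by rewrite ltr01.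
Qed.

Lemma mset1_meas (B : set X) : measurable B ->
  measurable (mset B 1%R : set (pprobability X R)).
Proof.
move=> mB; apply: sub_gen_smallest; exists 1%R; last by exists B.
by rewrite /= in_itv /= ler01 lexx.
Qed.

Lemma diracP_one (x : X) B : diracP R x B = 1 <-> B x.
Proof.
rewrite diracPE; case: (boolP (x \in B)) => [|nB]; first by rewrite in_setE.
move: nB; rewrite notin_setE => nB; split => [/e01 []|/nB []].
Qed.

Lemma lt1_iff (q : probability X R) B : measurable B -> zero_one_valued q ->
  (q B = 1 <-> ~ q B < 1).
Proof.
move=> mB zo; case: (zo _ mB) => ->; last by rewrite ltxx.
by rewrite lte_fin ltr01; split => // /e01.
Qed.

Lemma meas_eq_trans (x y : X) (q : probability X R) :
  meas_eq (diracP R x) q -> meas_eq (diracP R y) q -> meas_eq (diracP R x) (diracP R y).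
Proof. by move=> h1 h2 A mA; rewrite h1 // h2. Qed.

Lemma diracP_meas : measurable_fun [set: X] (diracP R (X:=X)).
Proof.
move=> _ A mA; rewrite setTI.
exact: (proj1 (@Lpre R d X _ (@dirac_zo R d X point) A mA)).
Qed.
End helpers.

Section phim.
Context (R : realType) d (X : measurableType d) (phi : set X -> bool) (hphi : sigma_hom phi).

Definition phim (A : set X) : \bar R := (phi A)%:R%:E.

Lemma phim0 : phim set0 = 0.
Proof. by rewrite /phim (proj1 (proj2 (proj2 hphi))). Qed.

Lemma phim_ge0 A : 0 <= phim A.
Proof. by rewrite /phim lee_fin; case: (phi A). Qed.

Lemma phim_sigma_additive : semi_sigma_additive phim.
Proof.
move=> F mF tF mU.
have [_ [_ [h0 [_ [hI [_ hU]]]]]] := hphi.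
case: (boolP (phi (\bigcup_n F n))) => hu.
- have [n0 hn0] := proj1 (hU F mF) hu.
  have hother : forall i, i != n0 -> phi (F i) = false.
    move=> i ni; apply/negbTE/negP => hi.
    have : phi (F i `&` F n0) by rewrite hI // hi hn0.
    have -> : F i `&` F n0 = set0.
      apply/seteqP; split => // x [Fi Fn0]; apply/negP: ni; rewrite negbK.
      by apply/eqP; apply: tF => //; exists x.
    by rewrite h0.
  rewrite /phim hu /=; apply: cvg_near_cst; exists n0.+1 => // n /= hn.
  rewrite big_mkord (bigD1 (Ordinal (hn : (n0 < n)%N))) //=.
  rewrite big1 ?adde0 /phim ?hn0 //.
  move=> i /negbTE ni; rewrite hother //; apply/negbT; move: ni.
  by apply: contraFF => /eqP ei; apply/eqP; apply: val_inj.
- have hz : forall i, phi (F i) = false.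
    by move=> i; apply/negbTE/negP => hi; move/negP: hu; apply; apply/(hU F mF); exists i.
  rewrite /phim (negbTE hu) /=.
  rewrite (_ : (fun n => _) = fun _ => 0); first exact: cvg_cst.
  by apply/funext => n; rewrite big1 // => i _; rewrite hz.
Qed.

Lemma phim_setT : phim setT = 1.
Proof. by rewrite /phim (proj1 (proj2 hphi)). Qed.

HB.instance Definition _ := isMeasure.Build _ X R phim phim0 phim_ge0 phim_sigma_additive.
HB.instance Definition _ := Measure_isProbability.Build _ X R phim phim_setT.

Definition phiP : probability X R := phim.

Lemma phiP_zo : zero_one_valued phiP.
Proof. by move=> B _; rewrite /phiP /= /phim; case: (phi B); [right|left]. Qed.
End phim.

Section main.
Context (R : realType) d (X : measurableType d).

Lemma sober_cond2 (x : X) : meas_eq (@dirac _ (pprobability X R) (diracP R x) R)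
                          (pushforward (diracP R x) (diracP R (X:=X))).
Proof.
move=> A mA; rewrite /pushforward diracE diracPE.
by congr (_%:R%:E); apply/idP/idP; rewrite !inE.
Qed.

Lemma bij_sober : dirac_bij R X -> sober R X.
Proof.
move=> [inj sur]; split; first exact: diracP_meas.
split; first exact: sober_cond2.
move=> d' Z f mf hf.
have zo : forall z, zero_one_valued (f z : probability X R).
  move=> z B mB.
  have := hf z _ (@mset1_meas R d X B mB).
  rewrite /pushforward (@pre_mset1 R d X B) diracE.
  have -> : f z B = 1 - f z (~` B).
    by rewrite -probability_setC ?setCK //; exact: measurableC.
  by move=> <-; case: (_ \in _) => /=; [left; rewrite subee | right; rewrite sube0].
have [g hg] := choice (fun z => sur _ (zo z)).
have hgB : forall z B, measurable B -> (B (g z) <-> f z B = 1).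
  by move=> z B mB; rewrite -(@diracP_one R d X) hg.
exists g; split; first split.
- move=> _ B mB; rewrite setTI.
  have -> : g @^-1` B = [set: Z] `&` f @^-1` (~` mset B 1%R).
    apply/seteqP; split => z /=.
    + by move=> /(hgB z B mB) h; split => //; rewrite /mset /= h ltxx.
    + move=> [_ h]; apply/(hgB z B mB); apply/(@lt1_iff R d X _ B mB (zo z)).
      exact: h.
  by apply: mf => //; apply: measurableC; exact: (@mset1_meas R d X B mB).
- exact: hg.
- move=> g' [_ hg']; apply/funext => z; apply: inj.
  exact: (@meas_eq_trans R d X _ _ _ (hg z) (hg' z)).
Qed.

Lemma sober_bij : sober R X -> dirac_bij R X.
Proof.
move=> [mdirac [c2 uniq]]; split.
- move=> x y hxy.
  have hB : forall B, measurable B -> (B x <-> B y).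
    move=> B mB; rewrite -(@diracP_one R d X x) -(@diracP_one R d X y).
    by rewrite hxy.
  pose sw := fun z : X => if z == x then y else if z == y then x else z.
  have [g [[mg hg] ug]] := uniq _ X (diracP R (X:=X)) mdirac c2.
  have e1 := ug id (conj (@measurable_id _ X setT) (fun z A mA => erefl)).
  have mswap : measurable_fun [set: X] sw.
    move=> _ B mB; rewrite setTI.
    have -> : sw @^-1` B = B; last exact: mB.
    apply/seteqP; split => z; rewrite /sw /=.
    + case: (eqVneq z x) => [->|zx]; first by move/(hB B mB).
      by case: (eqVneq z y) => [->|//]; move/(hB B mB).
    + case: (eqVneq z x) => [->|zx]; first by move/(hB B mB).
      by case: (eqVneq z y) => [->|//]; move/(hB B mB).
  have hsw : forall z, meas_eq (diracP R (sw z)) (diracP R z).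
    move=> z A mA; rewrite /sw.
    case: (eqVneq z x) => [->|zx]; first by rewrite -hxy.
    by case: (eqVneq z y) => [->|//]; rewrite hxy.
  have e2 := ug sw (conj mswap hsw).
  have := congr1 (fun h => h x) (etrans (esym e1) e2).
  by rewrite /sw /= eqxx.
- move=> p zo.
  have := uniq _ X (fun _ => p : pprobability X R) (measurable_cst _).
  case.
  + move=> _ A mA.
    rewrite /pushforward diracE.
    have [m1 h1] := @Lpre R d X p zo A mA.
    case: (zo _ m1) => e.
    * have nA : (p \in A) = false.
        by apply/negbTE/negP; rewrite in_setE => /h1; rewrite e; exact: e01.
      by rewrite e nA.
    * have pA : p \in A by rewrite in_setE; apply/h1.
      by rewrite e pA.
  + move=> g [[_ hg] _]; exists (g point); exact: hg.
Qed.

Lemma eta_inj (x y : X) : Defs.eta x = Defs.eta y -> meas_eq (diracP R x) (diracP R y).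
Proof.
move=> e A mA.
have : eta_fun x A = eta_fun y A by exact: (congr1 (fun f => sval f A) e).
rewrite /eta_fun => eA; have h := asbool_eq_equiv eA.
rewrite !diracPE; have -> // : (x \in A) = (y \in A); apply/idP/idP; rewrite !in_setE.
- by move=> Ax; have [] := proj1 h (conj mA Ax).
- by move=> Ay; have [] := proj2 h (conj mA Ay).
Qed.

Definition phi_of (p : probability X R) : set X -> bool :=
  fun A => `[< measurable A /\ p A = 1 >].

Lemma phi_ofE p A : measurable A -> phi_of p A = `[< p A = 1 >].
Proof. by move=> mA; apply: asbool_equiv_eq; split => [[]|] //. Qed.

Lemma phi_of_hom p : zero_one_valued p -> sigma_hom (phi_of p).
Proof.
move=> zo; split; [|split; [|split; [|split; [|split; [|split]]]]].
- by move=> A nA; apply: asboolF => -[].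
- by rewrite phi_ofE // probability_setT; apply/asboolP.
- by rewrite phi_ofE // measure0; apply: asboolF; exact: e01.
- move=> A mA; rewrite !phi_ofE //; last exact: measurableC.
  by rewrite -asbool_neg; apply: asbool_equiv_eq; exact: (@zoC R d X p zo A mA).
- move=> A B mA mB; rewrite !phi_ofE //; last exact: measurableI.
  by rewrite -asbool_and; apply: asbool_equiv_eq; exact: (@zoI R d X p zo A B mA mB).
- move=> A B mA mB; rewrite !phi_ofE //; last exact: measurableU.
  by rewrite -asbool_or; apply: asbool_equiv_eq; exact: (@zoU2 R d X p zo A B mA mB).
- move=> F mF; rewrite phi_ofE; last exact: bigcupT_measurable.
  rewrite asboolE (@zoU R d X p zo F mF).
  by split => -[n h]; exists n; move: h; rewrite phi_ofE // asboolE.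
Qed.

Lemma iso_bij : stone_iso X -> dirac_bij R X.
Proof.
move=> [g [_ _ c1 c2]]; split.
- move=> x y h; rewrite -(c1 x) -(c1 y); congr g.
  apply: eq_exist; apply/funext => A; rewrite /eta_fun.
  apply: asbool_equiv_eq; split => -[mA hA]; split => //.
  + by apply/(@diracP_one R d X); rewrite -h //; apply/(@diracP_one R d X).
  + by apply/(@diracP_one R d X); rewrite h //; apply/(@diracP_one R d X).
- move=> p zo.
  pose phi : stone X := exist _ (phi_of p) (@phi_of_hom p zo).
  exists (g phi) => A mA.
  have e : eta_fun (g phi) A = phi_of p A by exact: (congr1 (fun f => sval f A) (c2 phi)).
  move: e; rewrite /eta_fun phi_ofE // => eA; have h := asbool_eq_equiv eA.
  case: (zo _ mA) => pA.
  + rewrite pA diracPE; have -> // : (g phi \in A) = false.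
    apply/negbTE/negP; rewrite in_setE => gA.
    by have := proj1 h (conj mA gA); rewrite pA; exact: e01.
  + rewrite pA; apply/(@diracP_one R d X); exact: (proj2 (proj2 h pA)).
Qed.

Lemma bij_iso : dirac_bij R X -> stone_iso X.
Proof.
move=> [inj sur].
have ex : forall phi : stone X, exists x, Defs.eta x = phi.
  move=> [phi hphi].
  have [x hx] := sur _ (@phiP_zo R d X phi hphi).
  exists x; apply: eq_exist; apply/funext => A; rewrite /eta_fun.
  case: (pselect (measurable A)) => mA; last first.
    by rewrite (proj1 hphi A mA); apply: asboolF => -[].
  have := hx A mA; rewrite diracPE /= /phim.
  case: (boolP (x \in A)) => xA; case: (phi A) => //= h.
  - by apply/asboolP; split => //; rewrite -in_setE.
  - by move: h => /esym/e01.
  - by move: h => /e01.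
  - by apply: asboolF => -[_ Ax]; move/negP: xA; apply; rewrite in_setE.
have [g hg] := choice ex.
exists g; split.
- move=> _ S [a [ma ->]]; rewrite setTI.
  rewrite (_ : _ @^-1` _ = a) //; apply/seteqP; split => x /=;
    rewrite /stone_set /= /eta_fun.
  + by move/asboolP => [].
  + by move=> ax; apply/asboolP.
- move=> _ Y mY; rewrite setTI; exists Y; split => //.
  apply/seteqP; split => phi /=; rewrite /stone_set /=;
    rewrite -[in sval phi](hg phi) /= /eta_fun.
  + by move=> gY; apply/asboolP.
  + by move/asboolP => [].
- move=> x; apply: inj; apply: eta_inj; exact: hg.
- exact: hg.
Qed.

Theorem lemma2p14' :
  (sober R X <-> dirac_bij R X) /\ (dirac_bij R X <-> stone_iso X).
Proof.
split; split.
- exact: sober_bij.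
- exact: bij_sober.
- exact: bij_iso.
- exact: iso_bij.
Qed.
End main.

Theorem lemma2p14 (R : realType) (d : measure_display) (X : measurableType d) :
  (sober R X <-> dirac_bij R X) /\ (dirac_bij R X <-> stone_iso X).
Proof. exact: lemma2p14'. Qed.
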